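(* Let $(E\to M,\rho,\langle\cdot,\cdot\rangle,\circ)$ be a Courant algebroid and $(\mathbf I,\mathbf J,\mathbf K)$ an almost hypercomplex structure on $E$. There exists a hypercomplex connection $\nabla$ satisfying $\nabla\mathbf I=\nabla\mathbf J=\nabla\mathbf K=0$ and $$T(X,Y)=\mathbf ID\langle X,\mathbf IY\rangle+\mathbf JD\langle X,\mathbf JY\rangle+\mathbf KD\langle X,\mathbf KY\rangle\quad\text{for all }X,Y\in\Gamma(E)$$ if and only if $N_{\mathbf I,\mathbf J}=0$. In that case this connection coincides with each of the three hypercomplex connections $$\nabla_XY=-\tfrac12\mathbf K\big(\mathbf JY\circ\mathbf IX-\mathbf J(Y\circ\mathbf IX)-\mathbf I(\mathbf JY\circ X)+\mathbf J\mathbf I(Y\circ X)\big),$$ $$\nabla'_XY=-\tfrac12\mathbf I\big(\mathbf KY\circ\mathbf JX-\mathbf K(Y\circ\mathbf JX)-\mathbf J(\mathbf KY\circ X)+\mathbf K\mathbf J(Y\circ X)\big),$$ $$\nabla''_XY=-\tfrac12\mathbf J\big(\mathbf IY\circ\mathbf KX-\mathbf I(Y\circ\mathbf KX)-\mathbf K(\mathbf IY\circ X)+\mathbf I\mathbf K(Y\circ X)\big).$$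
   Context: A Courant algebroid $(E\to M,\rho,\langle\cdot,\cdot\rangle,\circ)$ consists of a real vector bundle $E\to M$ over a smooth manifold, a nondegenerate symmetric fiberwise bilinear pairing $\langle\cdot,\cdot\rangle$ on $E$, a vector bundle map $\rho:E\to TM$ (the anchor), and an $\mathbb R$-bilinear operation $\circ$ on $\Gamma(E)$ (the Dorfman bracket) such that for all $f\in C^\infty(M)$, $x,y,z\in\Gamma(E)$: $x\circ(y\circ z)=(x\circ y)\circ z+y\circ(x\circ z)$; $\rho(x\circ y)=[\rho(x),\rho(y)]$; $x\circ(fy)=(\rho(x)f)y+f(x\circ y)$; $x\circ y+y\circ x=2D\langle x,y\rangle$; $(Df)\circ x=0$; $\rho(x)\langle y,z\rangle=\langle x\circ y,z\rangle+\langle y,x\circ z\rangle$. Here $D:C^\infty(M)\to\Gamma(E)$ is the $\mathbb R$-linear map defined by $\langle Df,x\rangle=\tfrac12\rho(x)f$. The Courant bracket is $[\![x,y]\!]=\tfrac12(x\circ y-y\circ x)$. For vector bundle endomorphisms $F,G$ of $E$ (over $\mathrm{id}_M$), the Nijenhuis concomitant is the tensor $N_{F,G}:E\otimes E\to E$ given by $N_{F,G}(X,Y)=FX\circ GY-F(X\circ GY)-G(FX\circ Y)+FG(X\circ Y)+GX\circ FY-G(X\circ FY)-F(GX\circ Y)+GF(X\circ Y)$. An almost hypercomplex structure on $E$ is a triple $(\mathbf I,\mathbf J,\mathbf K)$ of vector bundle endomorphisms of $E$ over $\mathrm{id}_M$, each orthogonal for $\langle\cdot,\cdot\rangle$, with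 $\mathbf I^2=\mathbf J^2=\mathbf K^2=\mathbf I\mathbf J\mathbf K=-1$. Given an almost hypercomplex structure, for $f\in C^\infty(M)$ and $X,Y\in\Gamma(E)$ set $\Delta_f(X,Y)=\langle X,Y\rangle Df+\langle\mathbf IX,Y\rangle\mathbf I Df+\langle\mathbf JX,Y\rangle\mathbf JDf+\langle\mathbf KX,Y\rangle\mathbf KDf$. A hypercomplex connection is an $\mathbb R$-bilinear map $\Gamma(E)\times\Gamma(E)\to\Gamma(E)$, $(X,Y)\mapsto\nabla_XY$, with $\nabla_{fX}Y=f\nabla_XY$ and $\nabla_X(fY)=(\rho(X)f)Y+f\nabla_XY-\Delta_f(X,Y)$. Its torsion is $T(X,Y)=\nabla_XY-\nabla_YX-[\![X,Y]\!]$. For an endomorphism $P$ of $E$, $(\nabla_XP)Y:=\nabla_X(PY)-P(\nabla_XY)$, and $\nabla P=0$ means this vanishes for all $X,Y$. *)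

(* Defs.v *)
(* Algebraic rendering of Courant algebroids:
   K     = the ground field (R in the paper; any real field here),
   A     = C^oo(M), a commutative K-algebra,
   E     = Gamma(E), an A-module of sections.
   Vector fields are K-linear derivations of A; vector bundle endomorphisms
   over id_M are A-linear maps E -> E. *)
From HB Require Import structures.
From mathcomp Require Import all_boot all_order all_algebra.
Set Implicit Arguments. Unset Strict Implicit. Unset Printing Implicit Defensive.
Import Order.TTheory GRing.Theory Num.Theory.
Local Open Scope ring_scope.

Definition half (K : realFieldType) (A : comAlgType K) : A := (2%:R : K)^-1%:A.

Definition Klin (K : realFieldType) (A : comAlgType K) (E E' : lmodType A)
  (F : E -> E') : Prop :=
  (forall x y, F (x + y) = F x + F y) /\
  (forall (k : K) x, F (k%:A *: x) = k%:A *: F x).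

(* vector bundle endomorphism over id_M = A-linear map on sections *)
Definition Alin (K : realFieldType) (A : comAlgType K) (E : lmodType A)
  (F : E -> E) : Prop :=
  forall (f : A) x y, F (f *: x + y) = f *: F x + F y.

(* rho(x) is a vector field, i.e. a K-linear derivation of A *)
Definition is_derivation (K : realFieldType) (A : comAlgType K) (d : A -> A) : Prop :=
  (forall f g, d (f + g) = d f + d g) /\
  (forall (k : K) f, d (k *: f) = k *: d f) /\
  (forall f g, d (f * g) = d f * g + f * d g).

(* Courant algebroid data (pair, anchor, dorf) together with the operator D
   characterised by <Df, x> = 1/2 rho(x) f (unique by nondegeneracy). *)
Definition is_courant (K : realFieldType) (A : comAlgType K) (E : lmodType A)
  (pair : E -> E -> A) (anchor : E -> A -> A) (dorf : E -> E -> E)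
  (D : A -> E) : Prop :=
  (forall (f : A) x y z, pair (f *: x + y) z = f * pair x z + pair y z) /\
  (forall x y, pair x y = pair y x) /\
  (* (fiberwise) nondegenerate: musical map E -> E^* is bijective *)
  (forall x, (forall y, pair x y = 0) -> x = 0) /\
  (forall phi : E -> A, (forall (f : A) x y, phi (f *: x + y) = f * phi x + phi y) ->
     exists x, forall y, pair x y = phi y) /\
  (* anchor: vector bundle map E -> TM *)
  (forall (f : A) x y g, anchor (f *: x + y) g = f * anchor x g + anchor y g) /\
  (forall x, is_derivation (anchor x)) /\
  (forall x, Klin (dorf x)) /\
  (forall y, Klin (fun x => dorf x y)) /\
  (forall f x, pair (D f) x = half A * anchor x f) /\
  (forall x y z, dorf x (dorf y z) = dorf (dorf x y) z + dorf y (dorf x z)) /\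
  (forall x y f, anchor (dorf x y) f = anchor x (anchor y f) - anchor y (anchor x f)) /\
  (forall x (f : A) y, dorf x (f *: y) = anchor x f *: y + f *: dorf x y) /\
  (forall x y, dorf x y + dorf y x = (2%:R : A) *: D (pair x y)) /\
  (forall f x, dorf (D f) x = 0) /\
  (forall x y z, anchor x (pair y z) = pair (dorf x y) z + pair y (dorf x z)).

Definition courant_bracket (K : realFieldType) (A : comAlgType K) (E : lmodType A)
  (dorf : E -> E -> E) (x y : E) : E := half A *: (dorf x y - dorf y x).

Definition nijenhuis_concomitant (K : realFieldType) (A : comAlgType K) (E : lmodType A)
  (dorf : E -> E -> E) (F G : E -> E) (X Y : E) : E :=
  dorf (F X) (G Y) - F (dorf X (G Y)) - G (dorf (F X) Y) + F (G (dorf X Y))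
  + dorf (G X) (F Y) - G (dorf X (F Y)) - F (dorf (G X) Y) + G (F (dorf X Y)).

Definition orthogonal (K : realFieldType) (A : comAlgType K) (E : lmodType A)
  (pair : E -> E -> A) (F : E -> E) : Prop :=
  forall x y, pair (F x) (F y) = pair x y.

Definition almost_hypercomplex (K : realFieldType) (A : comAlgType K) (E : lmodType A)
  (pair : E -> E -> A) (I J Kk : E -> E) : Prop :=
  Alin I /\ Alin J /\ Alin Kk /\
  orthogonal pair I /\ orthogonal pair J /\ orthogonal pair Kk /\
  (forall x, I (I x) = - x) /\ (forall x, J (J x) = - x) /\
  (forall x, Kk (Kk x) = - x) /\ (forall x, I (J (Kk x)) = - x).

Definition Delta (K : realFieldType) (A : comAlgType K) (E : lmodType A)
  (pair : E -> E -> A) (D : A -> E) (I J Kk : E -> E) (f : A) (X Y : E) : E :=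
  pair X Y *: D f + pair (I X) Y *: I (D f) + pair (J X) Y *: J (D f)
  + pair (Kk X) Y *: Kk (D f).

Definition hypercomplex_connection (K : realFieldType) (A : comAlgType K)
  (E : lmodType A) (pair : E -> E -> A) (anchor : E -> A -> A) (D : A -> E)
  (I J Kk : E -> E) (nabla : E -> E -> E) : Prop :=
  (forall X, Klin (nabla X)) /\ (forall Y, Klin (fun X => nabla X Y)) /\
  (forall (f : A) X Y, nabla (f *: X) Y = f *: nabla X Y) /\
  (forall X (f : A) Y, nabla X (f *: Y) =
     anchor X f *: Y + f *: nabla X Y - Delta pair D I J Kk f X Y).

Definition torsion (K : realFieldType) (A : comAlgType K) (E : lmodType A)
  (dorf : E -> E -> E) (nabla : E -> E -> E) (X Y : E) : E :=
  nabla X Y - nabla Y X - courant_bracket dorf X Y.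

Definition parallel (K : realFieldType) (A : comAlgType K) (E : lmodType A)
  (nabla : E -> E -> E) (P : E -> E) : Prop :=
  forall X Y, nabla X (P Y) - P (nabla X Y) = 0.

Definition conn_formula (K : realFieldType) (A : comAlgType K) (E : lmodType A)
  (dorf : E -> E -> E) (P Q R : E -> E) (X Y : E) : E :=
  - half A *: R (dorf (Q Y) (P X) - Q (dorf Y (P X)) - P (dorf (Q Y) X)
                 + Q (P (dorf Y X))).

Definition good_connection (K : realFieldType) (A : comAlgType K) (E : lmodType A)
  (pair : E -> E -> A) (anchor : E -> A -> A) (dorf : E -> E -> E) (D : A -> E)
  (I J Kk : E -> E) (nabla : E -> E -> E) : Prop :=
  hypercomplex_connection pair anchor D I J Kk nabla /\
  parallel nabla I /\ parallel nabla J /\ parallel nabla Kk /\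
  (forall X Y, torsion dorf nabla X Y =
     I (D (pair X (I Y))) + J (D (pair X (J Y))) + Kk (D (pair X (Kk Y)))).

(* Main.v *)
Require Import Defs.
From HB Require Import structures.
From mathcomp Require Import all_boot all_order all_algebra.
Import Order.TTheory GRing.Theory Num.Theory.
Local Open Scope ring_scope.

Set Implicit Arguments. Unset Strict Implicit.
Inductive zexp := ZAtom of nat | ZAdd of zexp & zexp | ZOpp of zexp | ZZero.

Fixpoint zeval (V : zmodType) (env : seq V) (e : zexp) : V :=
  match e with
  | ZAtom i => nth 0 env i
  | ZAdd a b => zeval env a + zeval env b
  | ZOpp a => - zeval env a
  | ZZero => 0
  end.

Fixpoint leval (V : zmodType) (env : seq V) (c : seq int) : V :=
  match env, c with
  | e :: env', a :: c' => e *~ a + leval env' c'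
  | _, _ => 0
  end.

Fixpoint vadd (c d : seq int) : seq int :=
  match c, d with
  | a :: c', b :: d' => (a + b) :: vadd c' d'
  | [::], d => d
  | c, [::] => c
  end.

Fixpoint znorm (e : zexp) : seq int :=
  match e with
  | ZAtom i => ncons i 0 [:: 1]
  | ZAdd a b => vadd (znorm a) (znorm b)
  | ZOpp a => map (fun x => - x) (znorm a)
  | ZZero => [::]
  end.

Lemma leval_add (V : zmodType) (env : seq V) c d :
  leval env (vadd c d) = leval env c + leval env d.
Proof.
elim: env c d => [|e env IH] [|a c] [|b d] //=; rewrite ?addr0 ?add0r //.
by rewrite IH mulrzDr addrACA.
Qed.

Lemma leval_opp (V : zmodType) (env : seq V) c :
  leval env (map (fun x => - x) c) = - leval env c.
Proof.
elim: env c => [|e env IH] [|a c] //=; rewrite ?oppr0 //.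
by rewrite IH mulrNz opprD.
Qed.

Lemma leval_atom (V : zmodType) (env : seq V) i :
  leval env (ncons i 0 [:: 1]) = nth 0 env i.
Proof.
elim: env i => [|e env IH] [|i] //=; first by case: env {IH} => [|? ?]; rewrite addr0.
by rewrite IH mulr0z add0r.
Qed.

Lemma leval_norm (V : zmodType) (env : seq V) e : zeval env e = leval env (znorm e).
Proof.
elim: e => [i|a IHa b IHb|a IHa|] /=.
- by rewrite leval_atom.
- by rewrite leval_add IHa IHb.
- by rewrite leval_opp IHa.
- by case: env.
Qed.

Lemma leval_zero (V : zmodType) (env : seq V) c :
  all (fun x => x == 0) c -> leval env c = 0.
Proof.
elim: env c => [|e env IH] [|a c] //= /andP[/eqP -> H].
by rewrite mulr0z add0r IH.
Qed.

Lemma zsound (V : zmodType) (env : seq V) e1 e2 :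
  all (fun x => x == 0) (vadd (znorm e1) (map (fun x => - x) (znorm e2))) ->
  zeval env e1 = zeval env e2.
Proof.
move=> H; apply/eqP; rewrite -subr_eq0 !leval_norm -leval_opp -leval_add.
by rewrite leval_zero.
Qed.

Ltac zfind x ls k kfail :=
  lazymatch ls with
  | nil => kfail tt
  | ?y :: ?ls' => tryif unify x y then k 0%N
                  else zfind x ls' ltac:(fun n => let m := constr:(S n) in k m) kfail
  end.

Ltac zgather t ls k :=
  lazymatch t with
  | @GRing.add _ ?a ?b => zgather a ls ltac:(fun l1 => zgather b l1 k)
  | @GRing.opp _ ?a => zgather a ls k
  | @GRing.zero _ => k ls
  | _ => zfind t ls ltac:(fun _ => k ls) ltac:(fun _ => let l' := constr:(t :: ls) in k l')
  end.

Ltac zreify t ls k :=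
  lazymatch t with
  | @GRing.add _ ?a ?b =>
      zreify a ls ltac:(fun x => zreify b ls ltac:(fun y => let z := constr:(ZAdd x y) in k z))
  | @GRing.opp _ ?a => zreify a ls ltac:(fun x => let z := constr:(ZOpp x) in k z)
  | @GRing.zero _ => k constr:(ZZero)
  | _ => zfind t ls ltac:(fun n => let z := constr:(ZAtom n) in k z) ltac:(fun _ => fail 100 "atom")
  end.

Ltac zmod_eq :=
  lazymatch goal with
  | |- @eq ?T ?l ?r =>
    zgather l (@nil T) ltac:(fun l0 => zgather r l0 ltac:(fun ls =>
    zreify l ls ltac:(fun el => zreify r ls ltac:(fun er =>
    change (zeval ls el = zeval ls er); apply: zsound; vm_compute; reflexivity))))
  end.


Lemma addf0 (U V : zmodType) (f : U -> V) :
  (forall x y, f (x + y) = f x + f y) -> f 0 = 0.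
Proof. by move=> H; apply: (addrI (f 0)); rewrite -H !addr0. Qed.

Lemma addfN (U V : zmodType) (f : U -> V) :
  (forall x y, f (x + y) = f x + f y) -> forall x, f (- x) = - f x.
Proof. by move=> H x; apply/eqP; rewrite -subr_eq0 opprK -H addNr (addf0 H). Qed.

Lemma AlinD (K : realFieldType) (A : comAlgType K) (E : lmodType A) (S : E -> E) :
  Alin S -> forall x y, S (x + y) = S x + S y.
Proof. by move=> H x y; have := H 1 x y; rewrite !scale1r. Qed.

Lemma AlinN (K : realFieldType) (A : comAlgType K) (E : lmodType A) (S : E -> E) :
  Alin S -> forall x, S (- x) = - S x.
Proof. by move=> H; apply: addfN; apply: AlinD. Qed.

Lemma AlinZ (K : realFieldType) (A : comAlgType K) (E : lmodType A) (S : E -> E) :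
  Alin S -> forall (f : A) x, S (f *: x) = f *: S x.
Proof.
move=> H f x; have := H f x 0; rewrite !addr0 => ->.
by rewrite (addf0 (AlinD H)) addr0.
Qed.

Definition Cf (V : zmodType) (dorf : V -> V -> V) (T S : V -> V) (X Y : V) : V :=
  dorf (S Y) (T X) - S (dorf Y (T X)) - T (dorf (S Y) X) + S (T (dorf Y X)).
Unset Implicit Arguments.

Theorem mainTheorem8 (K : realFieldType) (A : comAlgType K) (E : lmodType A)
  (pair : E -> E -> A) (anchor : E -> A -> A) (dorf : E -> E -> E) (D : A -> E)
  (HC : is_courant pair anchor dorf D)
  (I J Kk : E -> E) (HH : almost_hypercomplex pair I J Kk) :
  ((exists nabla, good_connection pair anchor dorf D I J Kk nabla) <->
     (forall X Y, nijenhuis_concomitant dorf I J X Y = 0)) /\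
  (forall nabla, good_connection pair anchor dorf D I J Kk nabla ->
     forall X Y,
       nabla X Y = conn_formula dorf I J Kk X Y /\
       nabla X Y = conn_formula dorf J Kk I X Y /\
       nabla X Y = conn_formula dorf Kk I J X Y).
Proof.
case: HC => [pL [pS [pND [pRz [aL [aDer [dL1 [dL2 [HD [Jac [aHom [dLeib [dSym [dD dInv]]]]]]]]]]]]]].
have pDl x y z : pair (x + y) z = pair x z + pair y z.
  by have := pL 1 x y z; rewrite scale1r mul1r.
have pNl x z : pair (- x) z = - pair x z.
  exact: (@addfN _ _ (pair ^~ z) (fun x y => pDl x y z)).
have pZl f x z : pair (f *: x) z = f * pair x z.
  have := pL f x 0 z; rewrite !addr0 => ->.
  by rewrite (@addf0 _ _ (pair ^~ z) (fun x y => pDl x y z)) addr0.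
have pDr x y z : pair z (x + y) = pair z x + pair z y by rewrite !(pS z) pDl.
have pNr x z : pair z (- x) = - pair z x by rewrite !(pS z) pNl.
have pZr f x z : pair z (f *: x) = f * pair z x by rewrite !(pS z) pZl.
have aD x f g : anchor x (f + g) = anchor x f + anchor x g by case: (aDer x).
have aM x f g : anchor x (f * g) = anchor x f * g + f * anchor x g by case: (aDer x) => _ [].
have DD f g : D (f + g) = D f + D g.
  apply/eqP; rewrite -subr_eq0; apply/eqP; apply: pND => y.
  by rewrite pDl pNl pDl !HD aD mulrDr subrr.
have DN f : D (- f) = - D f by exact: addfN.
have DM f g : D (f * g) = f *: D g + g *: D f.
  apply/eqP; rewrite -subr_eq0; apply/eqP; apply: pND => y.
  rewrite pDl pNl pDl !pZl !HD aM mulrDr [anchor y f * g]mulrC (mulrCA f) (mulrCA g).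
  zmod_eq.
have dDr x y z : dorf x (y + z) = dorf x y + dorf x z by case: (dL1 x).
have dDl x y z : dorf (x + y) z = dorf x z + dorf y z by case: (dL2 z) => H _; exact: H.
have dNr x y : dorf x (- y) = - dorf x y by exact: addfN.
have dNl x y : dorf (- x) y = - dorf x y.
  exact: (@addfN _ _ (dorf ^~ y) (fun a b => dDl a b y)).
have dZr x (k : K) y : dorf x (k%:A *: y) = k%:A *: dorf x y by case: (dL1 x).
have dZl x (k : K) y : dorf (k%:A *: x) y = k%:A *: dorf x y by case: (dL2 y) => _ H; exact: H.
have dSym' x y : dorf y x = - dorf x y + (D (pair x y) + D (pair x y)).
  by have := dSym x y; rewrite scaler_nat mulr2n => <-; rewrite addKr.
have dLeib1 f y z : dorf (f *: y) z =
    f *: dorf y z - anchor z f *: y + (pair y z *: D f + pair y z *: D f).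
  rewrite (dSym' z (f *: y)) dLeib (dSym' y z) pZr (pS z y) DM.
  rewrite !scalerDr !scalerN; zmod_eq.
have hh : Defs.half A + Defs.half A = 1.
  have e : ((2%:R : K)^-1 + (2%:R)^-1) = 1.
    by have := splitr (1 : K); rewrite mul1r => h; exact: esym h.
  by rewrite /Defs.half -scalerDl e scale1r.
have halfE (v : E) : Defs.half A *: (v + v) = v by rewrite scalerDr -scalerDl hh scale1r.
have halfC (f : A) (v : E) : Defs.half A *: (f *: v) = f *: (Defs.half A *: v).
  by rewrite !scalerA mulrC.
have F : forall P Q R, almost_hypercomplex pair P Q R ->
  (forall x, P (Q x) = R x) /\ (forall x, Q (P x) = - R x) /\ (forall x, Q (R x) = P x) /\
  (forall x, R (Q x) = - P x) /\ (forall x, R (P x) = Q x) /\ (forall x, P (R x) = - Q x) /\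
  (forall x y, pair (P x) y = - pair x (P y)) /\ (forall x y, pair (Q x) y = - pair x (Q y)) /\
  (forall x y, pair (R x) y = - pair x (R y)).
  move=> P Q R [PL [QL [RL [Po [Qo [Ro [PP [QQ [RR PQR]]]]]]]]].
  have sk S : Alin S -> Defs.orthogonal pair S -> (forall x, S (S x) = - x) ->
      forall x y, pair (S x) y = - pair x (S y).
    by move=> SL So SS x y; rewrite -(So x (S y)) SS pNr opprK.
  have PQ x : P (Q x) = R x.
    by have := PQR (R x); rewrite RR (AlinN QL) (AlinN PL) => /oppr_inj.
  have h1 x : Q (P (Q x)) = P x.
    by have := congr1 P (RR x); rewrite -!PQ PP (AlinN PL) => /oppr_inj.
  have QP x : Q (P x) = - R x.
    by have := h1 (Q x); rewrite QQ (AlinN PL) (AlinN QL) PQ => <-; rewrite opprK.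
  have QR x : Q (R x) = P x by rewrite -PQ h1.
  have RQ x : R (Q x) = - P x by rewrite -PQ QQ (AlinN PL).
  have RP x : R (P x) = Q x by rewrite -PQ QP (AlinN PL) -PQ PP opprK.
  have PR x : P (R x) = - Q x by rewrite -PQ PP.
  by do !split => //; apply: sk.
have U : forall P Q R, almost_hypercomplex pair P Q R -> forall nabla,
    parallel nabla P -> parallel nabla Q ->
    (forall X Y, torsion dorf nabla X Y =
       P (D (pair X (P Y))) + Q (D (pair X (Q Y))) + R (D (pair X (R Y)))) ->
    forall X Y, nabla X Y = conn_formula dorf P Q R X Y.
  move=> P Q R HP nabla parP parQ Ht X Y.
  have [PQ [QP [QR [RQ [RP [PR [skP [skQ skR]]]]]]]] := F P Q R HP.
  case: HP => [PL [QL [RL [_ [_ [_ [PP [QQ [RR _]]]]]]]]].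
  have nP a b : nabla a (P b) = P (nabla a b) by apply/eqP; rewrite -subr_eq0 parP.
  have nQ a b : nabla a (Q b) = Q (nabla a b) by apply/eqP; rewrite -subr_eq0 parQ.
  have dN a b : dorf a b = nabla a b - nabla b a
      - (P (D (pair a (P b))) + Q (D (pair a (Q b))) + R (D (pair a (R b))))
      + D (pair a b).
    rewrite -Ht /torsion /courant_bracket (dSym' a b).
    rewrite (_ : dorf a b - _ = (dorf a b - D (pair a b)) + (dorf a b - D (pair a b))).
      by rewrite halfE; zmod_eq.
    zmod_eq.
  have HC0 : dorf (Q Y) (P X) - Q (dorf Y (P X)) - P (dorf (Q Y) X) + Q (P (dorf Y X))
      = R (nabla X Y) + R (nabla X Y).
    rewrite (dN (Q Y) (P X)) (dN Y (P X)) (dN (Q Y) X) (dN Y X) !nP !nQ.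
    do 8 rewrite ?(AlinD PL) ?(AlinD QL) ?(AlinD RL) ?(AlinN PL) ?(AlinN QL) ?(AlinN RL)
      ?PP ?QQ ?RR ?PQ ?QP ?QR ?RQ ?RP ?PR ?pNl ?pNr ?skP ?skQ ?skR ?DN ?opprK
      ?(pS Y X) ?(pS Y (P X)) ?(pS Y (Q X)) ?(pS Y (R X)).
    zmod_eq.
  by rewrite /conn_formula HC0 (AlinD RL) !RR -opprD scaleNr scalerN opprK halfE.
have cfE P Q R X Y : conn_formula dorf P Q R X Y = - Defs.half A *: R (Cf dorf P Q X Y).
  by [].
have CS : forall T S, Alin T -> Alin S -> (forall x, S (S x) = - x) ->
    forall X Y, Cf dorf T S X (S Y) = - S (Cf dorf T S X Y).
  move=> T S TL SL SS X Y; rewrite /Cf.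
  do 3 rewrite ?SS ?dNl ?(AlinN TL) ?(AlinD SL) ?(AlinN SL) ?opprK.
  zmod_eq.
have cyc : forall P Q R, almost_hypercomplex pair P Q R -> almost_hypercomplex pair Q R P.
  move=> P Q R HP; have [_ [_ [_ [_ [RP _]]]]] := F P Q R HP.
  case: HP => [PL [QL [RL [Po [Qo [Ro [PP [QQ [RR _]]]]]]]]].
  by repeat split => //; move=> x; rewrite RP QQ.
have KT : forall P Q R, almost_hypercomplex pair P Q R -> forall X Y,
    R (torsion dorf (conn_formula dorf P Q R) X Y) =
    - (Defs.half A *: nijenhuis_concomitant dorf P Q X Y)
    + R (P (D (pair X (P Y))) + Q (D (pair X (Q Y))) + R (D (pair X (R Y)))).
  move=> P Q R HP X Y.
  have [PQ [QP [QR [RQ [RP [PR [skP [skQ skR]]]]]]]] := F P Q R HP.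
  case: HP => [PL [QL [RL [_ [_ [_ [PP [QQ [RR _]]]]]]]]].
  have NORM := (AlinD PL, AlinD QL, AlinD RL, AlinN PL, AlinN QL, AlinN RL,
    PP, QQ, RR, PQ, QP, QR, RQ, RP, PR, pNl, pNr, skP, skQ, skR, DN,
    (pS Y X, pS Y (P X), pS Y (Q X), pS Y (R X))).
  have W : Cf dorf P Q X Y - Cf dorf P Q Y X - R (dorf X Y - dorf Y X) =
      - nijenhuis_concomitant dorf P Q X Y +
      (R (P (D (pair X (P Y))) + Q (D (pair X (Q Y))) + R (D (pair X (R Y))))
      + R (P (D (pair X (P Y))) + Q (D (pair X (Q Y))) + R (D (pair X (R Y))))).
    rewrite /Cf /nijenhuis_concomitant (dSym' (P X) (Q Y)) (dSym' (P X) Y)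
      (dSym' X (Q Y)) (dSym' X Y).
    do 3 rewrite ?NORM ?opprK.
    zmod_eq.
  rewrite /torsion /courant_bracket !cfE.
  transitivity (Defs.half A *: (Cf dorf P Q X Y - Cf dorf P Q Y X - R (dorf X Y - dorf Y X))).
    do 3 rewrite ?(AlinD RL) ?(AlinN RL) ?(AlinZ RL) ?RR ?scaleNr ?scalerN ?scalerDr ?opprK.
    zmod_eq.
  by rewrite W scalerDr scalerN halfE.
have Ex : forall P Q R, almost_hypercomplex pair P Q R ->
    (forall X Y, nijenhuis_concomitant dorf P Q X Y = 0) ->
    good_connection pair anchor dorf D P Q R (conn_formula dorf P Q R).
  move=> P Q R HP HN.
  have HT := KT P Q R HP.
  have [PQ [QP [QR [RQ [RP [PR [skP [skQ skR]]]]]]]] := F P Q R HP.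
  case: HP => [PL [QL [RL [_ [_ [_ [PP [QQ [RR _]]]]]]]]].
  have NORM0 := (AlinD PL, AlinD QL, AlinD RL, AlinN PL, AlinN QL, AlinN RL,
    AlinZ PL, AlinZ QL, AlinZ RL, PP, QQ, RR, PQ, QP, QR, RQ, RP, PR).
  have Ceq X Y : Cf dorf P Q X Y = - Cf dorf Q P X Y.
    apply/eqP; rewrite -subr_eq0 opprK; apply/eqP.
    transitivity (nijenhuis_concomitant dorf P Q Y X); last exact: HN.
    rewrite /Cf /nijenhuis_concomitant.
    zmod_eq.
  have par_P : parallel (conn_formula dorf P Q R) P.
    move=> X Y; rewrite !cfE !Ceq (CS Q P QL PL PP).
    do 3 rewrite ?NORM0 ?opprK ?scalerN ?scaleNr ?scalerDr.
    zmod_eq.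
  have par_Q : parallel (conn_formula dorf P Q R) Q.
    move=> X Y; rewrite !cfE (CS P Q PL QL QQ).
    do 3 rewrite ?NORM0 ?opprK ?scalerN ?scaleNr ?scalerDr.
    zmod_eq.
  have nP X Y : conn_formula dorf P Q R X (P Y) = P (conn_formula dorf P Q R X Y).
    by apply/eqP; rewrite -subr_eq0 par_P.
  have nQ X Y : conn_formula dorf P Q R X (Q Y) = Q (conn_formula dorf P Q R X Y).
    by apply/eqP; rewrite -subr_eq0 par_Q.
  have par_R : parallel (conn_formula dorf P Q R) R.
    by move=> X Y; rewrite -!PQ nP nQ subrr.
  split; last first.
    split; first exact: par_P.
    split; first exact: par_Q.
    split; first exact: par_R.
    move=> X Y; have := HT X Y; rewrite HN scaler0 oppr0 add0r => h.
    by have := congr1 R h; rewrite !RR => /oppr_inj.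
  split.
    move=> X; split => [Y1 Y2 | k Y]; rewrite !cfE.
      do 3 rewrite ?NORM0 ?dDl ?dDr ?dNl ?dNr ?opprK ?scalerN ?scaleNr ?scalerDr.
      zmod_eq.
    do 3 rewrite ?NORM0 ?dZl ?dZr ?dDl ?dDr ?dNl ?dNr ?opprK ?scalerN ?scaleNr ?scalerDr ?halfC.
    zmod_eq.
  split.
    move=> Y; split => [X1 X2 | k X]; rewrite !cfE.
      do 3 rewrite ?NORM0 ?dDl ?dDr ?dNl ?dNr ?opprK ?scalerN ?scaleNr ?scalerDr.
      zmod_eq.
    do 3 rewrite ?NORM0 ?dZl ?dZr ?dDl ?dDr ?dNl ?dNr ?opprK ?scalerN ?scaleNr ?scalerDr ?halfC.
    zmod_eq.
  split.
    move=> f X Y; rewrite !cfE /Cf.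
    do 3 rewrite ?NORM0 ?dLeib ?dDl ?dDr ?dNl ?dNr ?opprK ?scalerN ?scaleNr ?scalerDr ?halfC.
    zmod_eq.
  move=> X f Y.
  have e : Cf dorf P Q X (f *: Y) = f *: Cf dorf P Q X Y +
      (R (anchor X f *: Y - Delta pair D P Q R f X Y)
       + R (anchor X f *: Y - Delta pair D P Q R f X Y)).
    rewrite /Cf /Delta.
    do 4 rewrite ?NORM0 ?dLeib1 ?dDl ?dDr ?dNl ?dNr ?opprK ?scalerN ?scaleNr ?scalerDr
      ?pNl ?pNr ?skP ?skQ ?skR ?DN ?(pS Y X) ?(pS Y (P X)) ?(pS Y (Q X)) ?(pS Y (R X)).
    zmod_eq.
  rewrite !cfE e (AlinD RL) (AlinD RL) (AlinZ RL) !RR -opprD.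
  rewrite scalerDr scaleNr scalerN scaleNr opprK halfE halfC.
  rewrite scaleNr scalerN.
  zmod_eq.
split.
  split.
    case=> nabla [Hc [pI [pJ [pK Ht]]]].
    move=> X Y.
    have Hn := U I J Kk HH nabla pI pJ Ht.
    have eT : torsion dorf (conn_formula dorf I J Kk) X Y = torsion dorf nabla X Y.
      by rewrite /torsion !Hn.
    have := KT I J Kk HH X Y; rewrite eT Ht => h.
    have hb : Defs.half A *: nijenhuis_concomitant dorf I J X Y = 0.
      have : - (Defs.half A *: nijenhuis_concomitant dorf I J X Y) = 0.
        by apply: (addIr (Kk (I (D (pair X (I Y))) + J (D (pair X (J Y)))
           + Kk (D (pair X (Kk Y)))))); rewrite -h add0r.
      by move/eqP; rewrite oppr_eq0 => /eqP.
    by rewrite -(halfE (nijenhuis_concomitant dorf I J X Y)) scalerDr hb addr0.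
  move=> HN; exists (conn_formula dorf I J Kk); exact: Ex I J Kk HH HN.
move=> nabla [Hc [pI [pJ [pK Ht]]]] X Y.
split; first exact: U I J Kk HH nabla pI pJ Ht X Y.
split.
  apply: (U J Kk I (cyc _ _ _ HH) nabla pJ pK) => a b.
  rewrite Ht; zmod_eq.
apply: (U Kk I J (cyc _ _ _ (cyc _ _ _ HH)) nabla pK pI) => a b.
rewrite Ht; zmod_eq.
Qed.
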